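(* Suppose there is an algorithm solving \textsc{BM Max-Conv UpperBound} on inputs of length $n$ in time $T(n)$. Then, given an instance $A[0..n],B[0..n],C[0..2n]$ of this problem, one can find indices $i,j$ with $C[i+j]<A[i]+B[j]$, if such indices exist, in time $O(T(n)\log n)$.
   Context: \textsc{BM Max-Conv UpperBound}: given monotone non-decreasing integer sequences $A[0..n]$, $B[0..n]$, $C[0..2n]$ with entries in $\{0,1,\dots,O(n)\}$, decide whether for all $k\in\{0,\dots,2n\}$ we have $C[k]\ge\max_{i+j=k}A[i]+B[j]$. Standing assumptions on $T$: $T(\widetilde{O}(n))\le\widetilde{O}(T(n))$ and $k\cdot T(n)\le O(T(kn))$. *)

(* Defs.v *)
From mathcomp Require Import all_boot.
Set Implicit Arguments. Unset Strict Implicit. Unset Printing Implicit Defensive.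

(* Instances: n, A[0..n], B[0..n], C[0..2n] given as functions nat -> nat
   (only the indicated ranges matter). *)
Definition monotone_upto (n : nat) (f : nat -> nat) : Prop :=
  forall i j, i <= j -> j <= n -> f i <= f j.

(* Valid instance: monotone non-decreasing, entries in {0, ..., K(n+1)}
   (K is the constant hidden in "O(n)"). *)
Definition valid_instance (K n : nat) (A B C : nat -> nat) : Prop :=
  [/\ monotone_upto n A, monotone_upto n B & monotone_upto (2 * n) C] /\
  [/\ (forall i, i <= n -> A i <= K * n.+1),
      (forall i, i <= n -> B i <= K * n.+1) &
      (forall k, k <= 2 * n -> C k <= K * n.+1)].

(* The answer of BM Max-Conv UpperBound: for all k, C[k] >= max_{i+j=k} A[i]+B[j],
   i.e. A[i] + B[j] <= C[i+j] for all i, j in [0..n]. *)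
Definition upper_bound (n : nat) (A B C : nat -> nat) : bool :=
  [forall i : 'I_n.+1, forall j : 'I_n.+1, A i + B j <= C (i + j)].

Definition witness (n : nat) (A B C : nat -> nat) (i j : nat) : Prop :=
  [/\ i <= n, j <= n & C (i + j) < A i + B j].

Definition memory := nat -> nat.
Definition upd (m : memory) (a v : nat) : memory :=
  fun x => if x == a then v else m x.

Inductive instr : Type :=
| IConst of nat & nat
| IAdd of nat & nat & nat
| ISub of nat & nat & nat
| IHalf of nat & nat
| ILoad of nat & nat
| IStore of nat & nat
| IJlt of nat & nat & nat
| IJmp of nat
| IOracle of nat & nat
| IHalt.

Definition oracle := nat -> (nat -> nat) -> (nat -> nat) -> (nat -> nat) -> bool.

(* Layout of an instance stored at address base:
   [base] = n, then A[0..n], then B[0..n], then C[0..2n]. *)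
Definition inst_n (m : memory) (base : nat) : nat := m base.
Definition inst_A (m : memory) (base : nat) : nat -> nat :=
  fun k => m (base + 1 + k).
Definition inst_B (m : memory) (base : nat) : nat -> nat :=
  fun k => m (base + m base + 2 + k).
Definition inst_C (m : memory) (base : nat) : nat -> nat :=
  fun k => m (base + 2 * m base + 3 + k).

(* A program counter outside the program halts.
   Every instruction costs 1; an oracle call on an instance of size n costs
   1 + T n. *)
Definition step (P : seq instr) (O : oracle) (T : nat -> nat)
    (pc : nat) (m : memory) : option (nat * memory * nat) :=
  match nth IHalt P pc with
  | IConst r v => Some (pc.+1, upd m r v, 1)
  | IAdd r a b => Some (pc.+1, upd m r (m a + m b), 1)
  | ISub r a b => Some (pc.+1, upd m r (m a - m b), 1)
  | IHalf r a => Some (pc.+1, upd m r (m a)./2, 1)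
  | ILoad r a => Some (pc.+1, upd m r (m (m a)), 1)
  | IStore a b => Some (pc.+1, upd m (m a) (m b), 1)
  | IJlt a b t => Some (if m a < m b then t else pc.+1, m, 1)
  | IJmp t => Some (t, m, 1)
  | IOracle r a =>
      let base := m a in
      Some (pc.+1,
            upd m r (nat_of_bool (O (inst_n m base) (inst_A m base)
                                    (inst_B m base) (inst_C m base))),
            (T (inst_n m base)).+1)
  | IHalt => None
  end.

Inductive Exec (P : seq instr) (O : oracle) (T : nat -> nat)
  : nat -> memory -> nat -> memory -> Prop :=
| ExecHalt pc m : step P O T pc m = None -> Exec P O T pc m 0 m
| ExecStep pc m pc' m' c t mf :
    step P O T pc m = Some (pc', m', c) ->
    Exec P O T pc' m' t mf -> Exec P O T pc m (c + t) mf.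

(* Initial memory: the input instance stored at base address 0,
   all other cells 0. *)
Definition init_mem (n : nat) (A B C : nat -> nat) : memory :=
  fun x =>
    if x == 0 then n
    else if x <= n.+1 then A (x - 1)
    else if x <= 2 * n + 2 then B (x - n.+2)
    else if x <= 4 * n + 3 then C (x - (2 * n + 3))
    else 0.

(* Output convention: m[0] = 1 and (m[1], m[2]) a violating pair (i, j),
   or m[0] = 0 and no violating pair exists. *)
Definition correct_output (n : nat) (A B C : nat -> nat) (m : memory) : Prop :=
  (m 0 = 1 /\ witness n A B C (m 1) (m 2)) \/
  (m 0 = 0 /\ ~ (exists i j, witness n A B C i j)).

Definition oracle_solves (K : nat) (O : oracle) : Prop :=
  forall n A B C, valid_instance K n A B C -> O n A B C = upper_bound n A B C.

Definition lg (n : nat) : nat := trunc_log 2 n.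

(* T(O~(n)) <= O~(T(n)) *)
Definition softO_closed (T : nat -> nat) : Prop :=
  forall a b, exists c d, forall n m, 2 <= n ->
    m <= a * n * lg n ^ b -> T m <= c * T n * lg n ^ d.

(* k * T(n) <= O(T(k n)) *)
Definition superadditive_O (T : nat -> nat) : Prop :=
  exists c, forall k n, 0 < k -> 0 < n -> k * T n <= c * T (k * n).

(* T(n) = Omega(n): any algorithm solving the problem reads its input. *)
Definition reads_input (T : nat -> nat) : Prop :=
  exists c, forall n, 0 < n -> n <= c * T n.

(* Main.v *)
Require Import Defs.
From mathcomp Require Import all_boot.
From mathcomp Require Import zify.
From Stdlib Require Import FunctionalExtensionality.

Set Implicit Arguments. Unset Strict Implicit.

Section Machine.
Variables (P : seq instr) (O : oracle) (T : nat -> nat).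

Inductive Run : nat -> memory -> nat -> nat -> memory -> Prop :=
| Run0 pc m : Run pc m 0 pc m
| RunS pc m pc1 m1 c t pc2 m2 :
    step P O T pc m = Some (pc1, m1, c) -> Run pc1 m1 t pc2 m2 -> Run pc m (c + t) pc2 m2.

Lemma Run_trans pc m t1 pc1 m1 t2 pc2 m2 :
  Run pc m t1 pc1 m1 -> Run pc1 m1 t2 pc2 m2 -> Run pc m (t1 + t2) pc2 m2.
Proof.
elim=> // {pc m t1 pc1 m1} pc m pc' m' c t pc1 m1 Hs _ IH H2.
rewrite -addnA; exact: RunS Hs (IH H2).
Qed.

Lemma Run_Exec pc m t pc1 m1 t' mf :
  Run pc m t pc1 m1 -> Exec P O T pc1 m1 t' mf -> Exec P O T pc m (t + t') mf.
Proof.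
elim=> // {pc m t pc1 m1} pc m pc' m' c t pc1 m1 Hs _ IH H2.
rewrite -addnA; exact: ExecStep Hs (IH H2).
Qed.

Lemma run1 pc m pc1 m1 t pc2 m2 :
  step P O T pc m = Some (pc1, m1, 1) -> Run pc1 m1 t pc2 m2 -> Run pc m t.+1 pc2 m2.
Proof. move=> H1 H2; exact: (RunS H1 H2). Qed.

Lemma step_jlt_t pc m a b t :
  nth IHalt P pc = IJlt a b t -> m a < m b -> step P O T pc m = Some (t, m, 1).
Proof. by rewrite /step => -> ->. Qed.
Lemma step_jlt_f pc m a b t :
  nth IHalt P pc = IJlt a b t -> m b <= m a -> step P O T pc m = Some (pc.+1, m, 1).
Proof. by rewrite /step => -> ; rewrite ltnNge => ->. Qed.

Lemma upd_other m a v x : x != a -> upd m a v x = m x.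
Proof. by rewrite /upd => /negbTE ->. Qed.
Lemma upd_eqx m a v x : x = a -> upd m a v x = v.
Proof. by rewrite /upd => ->; rewrite eqxx. Qed.

End Machine.

Arguments upd : simpl never.

Lemma ltn_false a b : b <= a -> (a < b) = false.
Proof. by rewrite ltnNge => ->. Qed.

Lemma upd_upd m a v w : upd (upd m a v) a w = upd m a w.
Proof. apply: functional_extensionality => x; rewrite /upd; by case: (x == a). Qed.


Ltac clear_neq := repeat match goal with
  | H : is_true (_ != _) |- _ => clear H
  | H : _ <> _ |- _ => clear H
  | H : is_true (~~ _) |- _ => clear H end.
Ltac lia_ := clear_neq; lia.

Ltac cond_tac := match goal with |- context [if ?c then _ else _] =>
  first [rewrite (@ifT _ c); [|lia_] | rewrite (@ifF _ c); [|apply: ltn_false; lia_]] end.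

Ltac mem_simpl :=
  repeat (rewrite ?upd_upd; match goal with
  | |- context [upd ?m ?a ?v ?x] =>
      (rewrite (@upd_other m a v x); [|by [] || (by rewrite eq_sym) || (apply/eqP; lia_)])
      || (rewrite (@upd_eqx m a v x); [|by [] || lia_])
  end).

Ltac st := eapply run1; [rewrite /step /=; mem_simpl; try cond_tac; reflexivity|]; mem_simpl.

Ltac ifs := repeat match goal with |- context [if ?c then _ else _] =>
  first [rewrite (@ifT _ c); [|lia_] | rewrite (@ifF _ c); [| apply: negbTE; lia_]] end.

Set Implicit Arguments. Unset Strict Implicit.

Section Blocks.
Variables (P : seq instr) (O : oracle) (T : nat -> nat).

Ltac stH H := eapply run1; [rewrite /step H; reflexivity|].

Lemma copy_spec l0 s d e one v Rb :
  nth IHalt P l0 = IJlt s e (2 + l0) ->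
  nth IHalt P (1 + l0) = IJmp (7 + l0) ->
  nth IHalt P (2 + l0) = ILoad v s ->
  nth IHalt P (3 + l0) = IStore d v ->
  nth IHalt P (4 + l0) = IAdd s s one ->
  nth IHalt P (5 + l0) = IAdd d d one ->
  nth IHalt P (6 + l0) = IJmp l0 ->
  uniq [:: s; d; e; one; v] ->
  s < Rb -> d < Rb -> e < Rb -> one < Rb -> v < Rb ->
  forall len m s0 d0 e0,
  m s = s0 -> m d = d0 -> m e = e0 -> m one = 1 -> e0 = s0 + len ->
  Rb <= s0 -> Rb <= d0 -> (s0 + len <= d0 \/ d0 + len <= s0) ->
  exists m', Run P O T l0 m (len * 6 + 2) (7 + l0) m' /\
    m' s = e0 /\ m' d = d0 + len /\ m' e = e0 /\ m' one = 1 /\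
    (forall x, x < len -> m' (d0 + x) = m (s0 + x)) /\
    (forall y, y != s -> y != d -> y != v -> (y < d0 \/ d0 + len <= y) -> m' y = m y).
Proof.
move=> H0 H1 H2 H3 H4 H5 H6 /= Hu Hs Hd He Ho Hv.
rewrite !inE !negb_or in Hu.
repeat match type of Hu with is_true (_ && _) => case/andP: Hu => ? Hu end.
elim=> [|len IH] m s0 d0 e0 ms md me mo E Rs Rd Hdis.
  exists m; split.
    eapply run1; [apply: (step_jlt_f O T H0); lia_|].
    eapply run1; first by rewrite /step H1.
    exact: Run0.
  do !split=> //; try lia_; by move=> x; lia_.
set m1 := upd (upd (upd (upd m v (m s0)) d0 (m s0)) s (s0.+1)) d (d0.+1).
have Hrun : Run P O T l0 m 6 l0 m1.
  eapply run1; [apply: (step_jlt_t O T H0); lia_|].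
  stH H2. stH H3. stH H4. stH H5.
  eapply run1; first by rewrite /step H6.
  rewrite ms; mem_simpl; rewrite ?ms ?md ?mo; mem_simpl; rewrite ?ms ?md ?mo; mem_simpl.
  rewrite ?ms ?md ?mo ?addn1.
  exact: Run0.
have [m' [Hr [A1 [A2 [A3 [A4 [A5 A6]]]]]]] :
    exists m', Run P O T l0 m1 (len * 6 + 2) (7 + l0) m' /\
    m' s = e0 /\ m' d = d0.+1 + len /\ m' e = e0 /\ m' one = 1 /\
    (forall x, x < len -> m' (d0.+1 + x) = m1 (s0.+1 + x)) /\
    (forall y, y != s -> y != d -> y != v -> (y < d0.+1 \/ d0.+1 + len <= y) -> m' y = m1 y).
  by apply: IH; rewrite /m1; mem_simpl; lia_.
exists m'; split; first by have := Run_trans Hrun Hr; rewrite mulSn addnA addnC.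
do !split => //; first lia_.
- move=> [|x] Hx.
  + rewrite addn0 A6; try (apply/eqP; lia_); last lia_.
    by rewrite /m1; mem_simpl; rewrite addn0.
  + rewrite addnS -addSn A5; last lia_.
    rewrite /m1; mem_simpl. by rewrite addSnnS.
- move=> y ys yd yv Hy.
  rewrite A6 //; last lia_.
  by rewrite /m1; mem_simpl.
Qed.


Lemma set_spec l0 s d e one v Rb :
  nth IHalt P l0 = IJlt s e (2 + l0) ->
  nth IHalt P (1 + l0) = IJmp (6 + l0) ->
  nth IHalt P (2 + l0) = IStore d v ->
  nth IHalt P (3 + l0) = IAdd s s one ->
  nth IHalt P (4 + l0) = IAdd d d one ->
  nth IHalt P (5 + l0) = IJmp l0 ->
  uniq [:: s; d; e; one; v] ->
  s < Rb -> d < Rb -> e < Rb -> one < Rb -> v < Rb ->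
  forall len m s0 d0 e0,
  m s = s0 -> m d = d0 -> m e = e0 -> m one = 1 -> e0 = s0 + len ->
  Rb <= d0 ->
  exists m', Run P O T l0 m (len * 5 + 2) (6 + l0) m' /\
    m' s = e0 /\ m' d = d0 + len /\ m' e = e0 /\ m' one = 1 /\ m' v = m v /\
    (forall x, x < len -> m' (d0 + x) = m v) /\
    (forall y, y != s -> y != d -> (y < d0 \/ d0 + len <= y) -> m' y = m y).
Proof.
move=> H0 H1 H2 H3 H4 H5 /= Hu Hs Hd He Ho Hv.
rewrite !inE !negb_or in Hu.
repeat match type of Hu with is_true (_ && _) => case/andP: Hu => ? Hu end.
elim=> [|len IH] m s0 d0 e0 ms md me mo E Rd.
  exists m; split.
    eapply run1; [apply: (step_jlt_f O T H0); lia_|].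
    eapply run1; first by rewrite /step H1.
    exact: Run0.
  do !split=> //; try lia_; by move=> x; lia_.
set m1 := upd (upd (upd m d0 (m v)) s (s0.+1)) d (d0.+1).
have Hrun : Run P O T l0 m 5 l0 m1.
  eapply run1; [apply: (step_jlt_t O T H0); lia_|].
  stH H2. stH H3. stH H4.
  eapply run1; first by rewrite /step H5.
  rewrite md; mem_simpl; rewrite ?ms ?md ?mo; mem_simpl; rewrite ?ms ?md ?mo; mem_simpl.
  rewrite ?ms ?md ?mo ?addn1.
  exact: Run0.
have [m' [Hr [A1 [A2 [A3 [A4 [A7 [A5 A6]]]]]]]] :
    exists m', Run P O T l0 m1 (len * 5 + 2) (6 + l0) m' /\
    m' s = e0 /\ m' d = d0.+1 + len /\ m' e = e0 /\ m' one = 1 /\ m' v = m1 v /\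
    (forall x, x < len -> m' (d0.+1 + x) = m1 v) /\
    (forall y, y != s -> y != d -> (y < d0.+1 \/ d0.+1 + len <= y) -> m' y = m1 y).
  by apply: (IH _ s0.+1); rewrite /m1; mem_simpl; lia_.
have Hm1v : m1 v = m v by rewrite /m1; mem_simpl.
exists m'; split; first by have := Run_trans Hrun Hr; rewrite mulSn addnA addnC.
do !split => //; first lia_; first by rewrite A7.
- move=> [|x] Hx.
  + rewrite addn0 A6; try (apply/eqP; lia_); last lia_.
    by rewrite /m1; mem_simpl.
  + rewrite addnS -addSn A5; last lia_.
    by rewrite Hm1v.
- move=> y ys yd Hy.
  rewrite A6 //; last lia_.
  by rewrite /m1; mem_simpl.
Qed.

End Blocks.

Set Implicit Arguments. Unset Strict Implicit.

Definition prog : seq instr := [::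
 (*0*) IAdd 0 0 0; IAdd 0 0 0; IAdd 0 0 0; IAdd 0 0 0;
 (*4*) IStore 0 1; IConst 1 1; IAdd 1 0 1; IStore 1 2; IConst 2 1;
 (*9*) IAdd 1 1 2; IStore 1 3; IAdd 1 1 2; IStore 1 4; IAdd 1 1 2; IStore 1 5;
 (*15*) IAdd 1 1 2; IStore 1 6; IAdd 1 1 2; IStore 1 7; IAdd 1 1 2; IStore 1 8;
 (*21*) IAdd 1 1 2; IStore 1 9; IAdd 1 1 2; IStore 1 10; IAdd 1 1 2; IStore 1 11;
 (*27*) IHalf 3 0; IHalf 3 3; IHalf 3 3; IHalf 3 3; ISub 4 0 2; IStore 4 3;
 (*33*) IConst 5 12; IConst 6 12; IAdd 6 6 4; IAdd 7 3 3; IAdd 7 7 7; IConst 8 4; IAdd 7 7 8;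
 (*40*) IJlt 5 7 42; IJmp 47; ILoad 8 5; IStore 6 8; IAdd 5 5 2; IAdd 6 6 2; IJmp 40;
 (*47*) IConst 11 0; IAdd 9 6 11; IAdd 10 3 3; IAdd 10 10 2; ISub 5 9 10; IAdd 7 9 11;
 (*53*) IJlt 5 7 55; IJmp 60; ILoad 8 5; IStore 6 8; IAdd 5 5 2; IAdd 6 6 2; IJmp 53;
 (*60*) IAdd 8 9 10; ISub 8 8 2; ILoad 1 8; IAdd 8 4 3; IAdd 8 8 2; ILoad 0 8; IAdd 1 1 0;
 (*67*) ISub 8 9 10; ISub 8 8 2; ILoad 0 8; IAdd 1 1 0; IConst 3 0; IAdd 0 10 2;
 (*73*) IAdd 8 3 2; IJlt 8 0 76; IJmp 103; IAdd 8 3 0; IHalf 8 8; IAdd 7 9 8; IAdd 5 9 11; ISub 6 9 10;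
 (*81*) IJlt 5 7 83; IJmp 88; ILoad 8 5; IStore 6 8; IAdd 5 5 2; IAdd 6 6 2; IJmp 81;
 (*88*) IAdd 7 9 10;
 (*89*) IJlt 5 7 91; IJmp 95; IStore 6 1; IAdd 5 5 2; IAdd 6 6 2; IJmp 89;
 (*95*) IOracle 8 4; IAdd 7 3 0; IHalf 7 7; IJlt 8 2 101; IAdd 3 7 11; IJmp 73; IAdd 0 7 11; IJmp 73;
 (*103*) IAdd 8 10 2; IJlt 0 8 107; IConst 0 0; IHalt;
 (*107*) IAdd 8 9 3; ILoad 1 8; ILoad 10 4; IConst 5 0;
 (*111*) ISub 6 3 5; IJlt 10 6 123; IAdd 7 4 2; IAdd 7 7 5; ILoad 7 7; IAdd 8 4 10; IAdd 8 8 2;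
 (*118*) IAdd 8 8 2; IAdd 8 8 6; ILoad 8 8; IAdd 7 7 8; IJlt 1 7 125;
 (*123*) IAdd 5 5 2; IJmp 111;
 (*125*) IAdd 1 5 11; IAdd 2 6 11; IConst 0 1; IHalt].

Lemma prog_check :
  (nth IHalt prog 40, nth IHalt prog 53, nth IHalt prog 73, nth IHalt prog 81, nth IHalt prog 89,
   nth IHalt prog 95, nth IHalt prog 103, nth IHalt prog 107, nth IHalt prog 111, nth IHalt prog 123,
   nth IHalt prog 125, size prog) =
  (IJlt 5 7 42, IJlt 5 7 55, IAdd 8 3 2, IJlt 5 7 83, IJlt 5 7 91, IOracle 8 4, IAdd 8 10 2,
   IAdd 8 9 3, ISub 6 3 5, IAdd 5 5 2, IAdd 1 5 11, 129).
Proof. by []. Qed.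

Definition Bq n := 16 * n - 1.
Definition Dd n := 20 * n + 3.
Definition QC n := 18 * n + 2.
Definition W n := 2 * n + 1.

Ltac lia' := unfold Bq, Dd, QC, W in *; lia_.

Lemma init_A n A B C i : i <= n -> init_mem n A B C (1 + i) = A i.
Proof. move=> hi; rewrite /init_mem; ifs; congr A; lia_. Qed.
Lemma init_B n A B C j : j <= n -> init_mem n A B C (n + 2 + j) = B j.
Proof. move=> hi; rewrite /init_mem; ifs; congr B; lia_. Qed.
Lemma init_C n A B C k : k <= 2 * n -> init_mem n A B C (2 * n + 3 + k) = C k.
Proof. move=> hi; rewrite /init_mem; ifs; congr C; lia_. Qed.

Set Implicit Arguments. Unset Strict Implicit.


Section Main.
Variables (O : oracle) (T : nat -> nat) (n : nat) (A B C : nat -> nat).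
Hypothesis Hn : 2 <= n.
Local Notation bq := (Bq n).

Lemma chunkA1 m : m 0 = n ->
  Run prog O T 0 m 4 4 (upd m 0 (16 * n)).
Proof.
move=> h0.
do 4 st.
rewrite h0.
match goal with |- Run _ _ _ _ (upd _ _ ?v) _ _ _ => have -> : v = 16 * n by lia_ end.
exact: Run0.
Qed.

Lemma chunkA2 m : m 0 = 16 * n ->
  Run prog O T 4 m 5 9 (upd (upd (upd (upd m (16 * n) (m 1)) 1 (16 * n + 1)) (16 * n + 1) (m 2)) 2 1).
Proof. move=> h0. do 5 st. rewrite h0. mem_simpl. exact: Run0. Qed.

Lemma pairA pc x p m : nth IHalt prog pc = IAdd 1 1 2 -> nth IHalt prog pc.+1 = IStore 1 x ->
  x != 1 -> m 1 = p -> m 2 = 1 ->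
  Run prog O T pc m 2 pc.+2 (upd (upd m 1 (p + 1)) (p + 1) (m x)).
Proof.
move=> e1 e2 hx h1 h2.
eapply run1; first by rewrite /step e1.
eapply run1; first by rewrite /step e2.
mem_simpl. rewrite h1 h2. exact: Run0.
Qed.

Lemma half16 : (16 * n)./2./2./2./2 = n.
Proof. by rewrite (_ : 16 * n = (n.*2.*2.*2.*2)) ?doubleK // -!mul2n; lia_. Qed.

Lemma chunkA4 m : m 0 = 16 * n -> m 2 = 1 ->
  Run prog O T 27 m 13 40 (upd (upd (upd (upd (upd (upd (upd (upd m 3 n) 4 (16 * n - 1))
     (16 * n - 1) n) 5 12) 6 (12 + (16 * n - 1))) 7 (n + n + (n + n))) 8 4) 7 (n + n + (n + n) + 4)).
Proof.
move=> h0 h2.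
do 13 st.
rewrite h0 h2 half16.
exact: Run0.
Qed.


Ltac disch H := match type of H with
  | ?P -> _ => let p := fresh in assert (p : P) by (mem_simpl; by [] || lia_);
               specialize (H p); clear p; disch H
  | _ => idtac end.

Ltac cont L := match goal with R : Run _ _ _ _ _ _ _ ?M |- _ =>
   let R2 := fresh in pose proof (L M) as R2; disch R2;
   have {R R2} R := Run_trans R R2; move: R; mem_simpl; move=> R end.

Lemma phaseA m0 : m0 0 = n -> exists m, Run prog O T 0 m0 40 40 m /\
  m 2 = 1 /\ m 3 = n /\ m 4 = bq /\ m 5 = 12 /\ m 6 = bq + 12 /\ m 7 = 4 * n + 4 /\
  m bq = n /\ (forall x, 1 <= x <= 11 -> m (bq + x) = m0 x) /\
  (forall x, 12 <= x <= 4 * n + 3 -> m x = m0 x).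
Proof.
move=> h0.
have R := @chunkA1 m0 h0.
cont chunkA2.
cont (@pairA 9 3 (16 * n + 1)).
cont (@pairA 11 4 (16 * n + 1 + 1)).
cont (@pairA 13 5 (16 * n + 1 + 1 + 1)).
cont (@pairA 15 6 (16 * n + 1 + 1 + 1 + 1)).
cont (@pairA 17 7 (16 * n + 1 + 1 + 1 + 1 + 1)).
cont (@pairA 19 8 (16 * n + 1 + 1 + 1 + 1 + 1 + 1)).
cont (@pairA 21 9 (16 * n + 1 + 1 + 1 + 1 + 1 + 1 + 1)).
cont (@pairA 23 10 (16 * n + 1 + 1 + 1 + 1 + 1 + 1 + 1 + 1)).
cont (@pairA 25 11 (16 * n + 1 + 1 + 1 + 1 + 1 + 1 + 1 + 1 + 1)).
cont chunkA4.
eexists; split; first exact R.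
rewrite /Bq.
do 7 (split; [mem_simpl; try lia_|]).
split.
  move=> x hx.
  have [->|[->|[->|[->|[->|[->|[->|[->|[->|[->|->]]]]]]]]]] :
    x = 1 \/ x = 2 \/ x = 3 \/ x = 4 \/ x = 5 \/ x = 6 \/ x = 7 \/ x = 8 \/ x = 9 \/ x = 10 \/ x = 11 by lia_.
  all: mem_simpl; try done.
move=> x hx; mem_simpl. done.
Qed.

Lemma phaseAB m0 : m0 0 = n -> exists m, Run prog O T 0 m0 (40 + ((4 * n - 8) * 6 + 2)) 47 m /\
  m 2 = 1 /\ m 3 = n /\ m 4 = bq /\ m 6 = bq + 4 * n + 4 /\
  m bq = n /\ (forall x, 1 <= x <= 4 * n + 3 -> m (bq + x) = m0 x).
Proof.
move=> h0; have [mA [RA [a2 [a3 [a4 [a5 [a6 [a7 [aB [aQ aI]]]]]]]]]] := phaseA h0.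
have [mB [RB [b5 [b6 [b7 [b2 [bC bF]]]]]]] :=
  @copy_spec prog O T 40 5 6 7 2 8 12 erefl erefl erefl erefl erefl erefl erefl erefl
    erefl erefl erefl erefl erefl (4 * n - 8) mA 12 (bq + 12) (4 * n + 4) a5 a6 a7 a2
    ltac:(lia_) (leqnn _) ltac:(rewrite /Bq; lia_) ltac:(rewrite /Bq; lia_).
exists mB; split; first exact: Run_trans RA RB.
rewrite /Bq in aB aQ bF b6 bC *.
split; first by [].
split; first by rewrite bF //; lia_.
split; first by rewrite bF //; lia_.
split; first lia_.
split; first by rewrite bF //; lia_.
move=> x hx.
case: (ltnP x 12) => hx12.
  rewrite bF; [apply: aQ; lia_ | by apply/eqP; lia_ | by apply/eqP; lia_ | by apply/eqP; lia_ | lia_].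
have := bC (x - 12) ltac:(lia_).
rewrite (_ : 16 * n - 1 + 12 + (x - 12) = 16 * n - 1 + x); last lia_.
move=> ->; rewrite aI; [congr m0 | ]; lia_.
Qed.

End Main.

Set Implicit Arguments. Unset Strict Implicit.

Section PhC.
Variables (O : oracle) (T : nat -> nat) (n : nat) (A B C : nat -> nat).
Hypothesis Hn : 2 <= n.
Local Notation bq := (Bq n).
Local Notation D := (Dd n).
Local Notation qc := (QC n).
Local Notation w := (W n).

Definition Mval := C (2 * n) + A n + B n.

Definition Lay (m : memory) := m bq = n /\ (forall i, i <= n -> m (bq + 1 + i) = A i) /\
  (forall j, j <= n -> m (bq + n + 2 + j) = B j) /\ (forall k, k <= 2 * n -> m (D + k) = C k).

Lemma phaseCE m : m 2 = 1 -> m 3 = n -> m 4 = bq -> m 6 = bq + 4 * n + 4 -> m bq = n ->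
  (forall x, 1 <= x <= 4 * n + 3 -> m (bq + x) = init_mem n A B C x) ->
  exists m', Run prog O T 47 m (6 + ((w * 6 + 2) + 13)) 73 m' /\ Lay m' /\
    m' 1 = Mval /\ m' 2 = 1 /\ m' 4 = bq /\ m' 9 = D /\ m' 10 = w /\ m' 11 = 0 /\
    m' 3 = 0 /\ m' 0 = w + 1.
Proof.
move=> h2 h3 h4 h6 hb hQ.
have Ebq : bq = 16 * n - 1 by [].
have ED : D = 20 * n + 3 by [].
have Ew : w = 2 * n + 1 by [].
evar (m1 : memory).
have R1 : Run prog O T 47 m 6 53 m1.
  rewrite /m1. do 6 st. rewrite h3 h2 h6. exact: Run0.
have [mD [RD [d5 [d6 [d7 [d2 [dC dF]]]]]]] :=
  @copy_spec prog O T 53 5 6 7 2 8 12 erefl erefl erefl erefl erefl erefl erefl erefl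
    erefl erefl erefl erefl erefl w m1 (D - w) D D
    ltac:(rewrite /m1; mem_simpl; lia')
    ltac:(rewrite /m1; mem_simpl; lia')
    ltac:(rewrite /m1; mem_simpl; lia')
    ltac:(rewrite /m1; mem_simpl; lia')
    ltac:(lia') ltac:(lia') ltac:(lia')
    ltac:(lia').
have fr y : 12 <= y -> y < D \/ D + w <= y -> mD y = m y.
  move=> *; rewrite dF; [|apply/eqP; lia'..|lia']; rewrite /m1; mem_simpl; lia'.
have e9 : mD 9 = D by rewrite dF //; try rewrite /m1; mem_simpl; lia'.
have e10 : mD 10 = w by rewrite dF //; try rewrite /m1; mem_simpl; lia'.
have e11 : mD 11 = 0 by rewrite dF //; try rewrite /m1; mem_simpl; lia'.
have e3 : mD 3 = n by rewrite dF //; try rewrite /m1; mem_simpl; lia'.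
have e4 : mD 4 = bq by rewrite dF //; try rewrite /m1; mem_simpl; lia'.
have hA a i : a = bq + 1 + i -> i <= n -> mD a = A i.
  move=> -> hi; rewrite fr; [|lia'|lia'].
  by rewrite -addnA hQ ?init_A //; lia'.
have hB a j : a = bq + n + 2 + j -> j <= n -> mD a = B j.
  move=> -> hi; rewrite fr; [|lia'|lia'].
  by rewrite -!addnA hQ ?addnA ?init_B //; lia'.
have hC a k : a = D + k -> k <= 2 * n -> mD a = C k.
  move=> -> hk; rewrite dC; last lia'.
  rewrite /m1; mem_simpl; try lia'.
  rewrite (_ : D - w + k = bq + (2 * n + 3 + k)); last lia'.
  by rewrite hQ ?init_C //; lia'.
have hb' : mD bq = n by rewrite fr //; lia'.
evar (m2 : memory).
have R2 : Run prog O T 60 mD 13 73 m2.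
  rewrite /m2. do 13 st. rewrite ?e9 ?e10 ?d2 ?e4 ?e11 ?e3. exact: Run0.
exists m2; split.
  have := Run_trans R1 (Run_trans RD R2); by rewrite addnA.
split.
  split; first by rewrite /m2; mem_simpl.
  split; first by move=> i hi; rewrite /m2; mem_simpl; apply: hA.
  split; first by move=> i hi; rewrite /m2; mem_simpl; apply: hB.
  by move=> i hi; rewrite /m2; mem_simpl; apply: hC.
split.
  rewrite /m2; mem_simpl.
  rewrite (hC (D + w - 1) (2 * n)); [|lia_|lia_].
  rewrite (hA (bq + n + 1) n); [|lia_|lia_].
  rewrite (hB (D - w - 1) n); [|lia_|lia_].
  by [].
rewrite /m2; mem_simpl.
do !split => //.
Qed.
End PhC.

Set Implicit Arguments. Unset Strict Implicit.

Lemma half_bounds x : x./2 + x./2 <= x <= x./2 + x./2 + 1.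
Proof. have := odd_double_half x; rewrite -addnn; case: (odd x) => /=; lia_. Qed.

Section PhD.
Variables (O : oracle) (T : nat -> nat) (n : nat) (A B C : nat -> nat) (K : nat).
Hypothesis Hn : 2 <= n.
Hypothesis HO : oracle_solves (3 * K) O.
Hypothesis Hv : valid_instance K n A B C.
Local Notation bq := (Bq n).
Local Notation D := (Dd n).
Local Notation qc := (QC n).
Local Notation w := (W n).
Local Notation Mv := (Mval n A B C).

Definition NoViol lo := forall i j, i <= n -> j <= n -> i + j < lo -> A i + B j <= C (i + j).
Definition ViolB h := exists i j, witness n A B C i j /\ i + j < h.

Lemma query_ok mid A' B' C' : mid <= w ->
  (forall i, i <= n -> A' i = A i) -> (forall j, j <= n -> B' j = B j) ->
  (forall k, k <= 2 * n -> C' k = if k < mid then C k else Mv) ->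
  (O n A' B' C' -> NoViol mid) /\ (O n A' B' C' = false -> ViolB mid).
Proof.
move=> hmid hA hB hC.
case: Hv => [[mA mB mC] [bA bB bC]].
have hM : forall i j, i <= n -> j <= n -> A i + B j <= Mv.
  move=> i j hi hj; rewrite /Mval.
  have := mA i n hi (leqnn _); have := mB j n hj (leqnn _); lia_.
have V : valid_instance (3 * K) n A' B' C'.
  split; split.
  - move=> i j hij hj; rewrite !hA //; [exact: mA | lia_].
  - move=> i j hij hj; rewrite !hB //; [exact: mB | lia_].
  - move=> i j hij hj; rewrite !hC //; last lia_.
    case: ifP => hi; case: ifP => hj'.
    + exact: mC.
    + have := mC i (2 * n) ltac:(lia_) (leqnn _); rewrite /Mval; lia_.
    + lia_.
    + by [].
  - move=> i hi; rewrite hA //; have := bA i hi; lia_.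
  - move=> i hi; rewrite hB //; have := bB i hi; lia_.
  - move=> k hk; rewrite hC //; case: ifP => _.
      have := bC k hk; lia_.
    rewrite /Mval; have := bC (2 * n) (leqnn _); have := bA n (leqnn _);
      have := bB n (leqnn _); lia_.
rewrite (HO V) /upper_bound; split.
  move=> /forallP H i j hi hj hij.
  have := forallP (H (@Ordinal n.+1 i ltac:(lia_))) (@Ordinal n.+1 j ltac:(lia_)).
  rewrite /= hA // hB // hC; last lia_.
  by rewrite hij.
move=> /negbT /forallPn [[i hi]] /forallPn [[j hj]] /=.
rewrite -ltnNge hA; last lia_. rewrite hB; last lia_. rewrite hC; last lia_.
case: ifP => hij H.
  by exists i, j; split => //; split; lia_.
have := hM i j ltac:(lia_) ltac:(lia_); lia_.
Qed.


Definition Inv lo hi (m : memory) := Lay n A B C m /\ m 1 = Mv /\ m 2 = 1 /\ m 4 = bq /\ m 9 = D /\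
  m 10 = w /\ m 11 = 0 /\ m 3 = lo /\ m 0 = hi /\ lo < hi <= w + 1 /\ NoViol lo /\ (hi <= w -> ViolB hi).

Lemma Lay_frame m m' : Lay n A B C m ->
  (forall y, 12 <= y -> y < qc \/ D <= y -> m' y = m y) -> Lay n A B C m'.
Proof.
have Ebq : bq = 16 * n - 1 by [].
have ED : D = 20 * n + 3 by [].
have Eqc : qc = 18 * n + 2 by [].
move=> [lb [lA [lB lC]]] F; split; [|split; [|split]].
- rewrite F //; lia_.
- move=> i hi; rewrite F; [exact: lA | lia_ | lia_].
- move=> i hi; rewrite F; [exact: lB | lia_ | lia_].
- move=> i hi; rewrite F; [exact: lC | lia_ | lia_].
Qed.

Definition itc := 6 * w + 20 + T n.

Lemma iter lo hi m : Inv lo hi m -> lo.+1 < hi -> exists t m' lo' hi',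
  Run prog O T 73 m t 73 m' /\ t <= itc /\ Inv lo' hi' m' /\ 2 * (hi' - lo') <= hi - lo + 1.
Proof.
move=> [[lb [lA [lB lC]]] [h1 [h2 [h4 [h9 [h10 [h11 [h3 [h0 [hlh [hNV hVB]]]]]]]]]]] hgap.
have Ebq : bq = 16 * n - 1 by [].
have ED : D = 20 * n + 3 by [].
have Ew : w = 2 * n + 1 by [].
have Eqc : qc = 18 * n + 2 by [].
have hm := half_bounds (lo + hi).
evar (m1 : memory).
have R1 : Run prog O T 73 m 7 81 m1.
  rewrite /m1. do 7 st. rewrite ?h3 ?h0 ?h9 ?h11 ?h10. exact: Run0.
have Hmw : (lo + hi)./2 <= w by lia_.
have [mC [RC [c5 [c6 [c7 [c2 [cC cF]]]]]]] :=
  @copy_spec prog O T 81 5 6 7 2 8 12 erefl erefl erefl erefl erefl erefl erefl erefl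
    erefl erefl erefl erefl erefl ((lo + hi)./2) m1 D (D - w) (D + (lo + hi)./2)
    ltac:(rewrite /m1; mem_simpl; lia_)
    ltac:(rewrite /m1; mem_simpl; lia_)
    ltac:(rewrite /m1; mem_simpl; lia_)
    ltac:(rewrite /m1; mem_simpl; lia_)
    ltac:(lia_) ltac:(lia_) ltac:(lia_) ltac:(lia_).
have cfr y : 12 <= y -> y < qc \/ D <= y -> mC y = m y.
  move=> *; rewrite cF; [|apply/eqP; lia_..|lia_]; rewrite /m1; mem_simpl; lia_.
have c0 : mC 0 = m 0 by rewrite cF //; try rewrite /m1; mem_simpl; lia_.
have c1 : mC 1 = m 1 by rewrite cF //; try rewrite /m1; mem_simpl; lia_.
have c3 : mC 3 = m 3 by rewrite cF //; try rewrite /m1; mem_simpl; lia_.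
have c4 : mC 4 = m 4 by rewrite cF //; try rewrite /m1; mem_simpl; lia_.
have c9 : mC 9 = m 9 by rewrite cF //; try rewrite /m1; mem_simpl; lia_.
have c10 : mC 10 = m 10 by rewrite cF //; try rewrite /m1; mem_simpl; lia_.
have c11 : mC 11 = m 11 by rewrite cF //; try rewrite /m1; mem_simpl; lia_.
evar (m3 : memory).
have R3 : Run prog O T 88 mC 1 89 m3.
  rewrite /m3. st. rewrite c9 c10 h9 h10. exact: Run0.
have [mS [RS [s5 [s6 [s7 [s2 [s1 [sQ sF]]]]]]]] :=
  @set_spec prog O T 89 5 6 7 2 1 12 erefl erefl erefl erefl erefl erefl erefl
    erefl erefl erefl erefl erefl (w - (lo + hi)./2) m3 (D + (lo + hi)./2)
    (D - w + (lo + hi)./2) (D + w)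
    ltac:(rewrite /m3; mem_simpl; lia_)
    ltac:(rewrite /m3; mem_simpl; lia_)
    ltac:(rewrite /m3; mem_simpl; lia_)
    ltac:(rewrite /m3; mem_simpl; lia_)
    ltac:(lia_) ltac:(lia_).
have sfr y : 12 <= y -> y < qc \/ D <= y -> mS y = m y.
  move=> *; rewrite sF; [|apply/eqP; lia_..|lia_]; rewrite /m3; mem_simpl; rewrite cfr //; lia_.
have s0' : mS 0 = m 0 by rewrite sF //; try rewrite /m3; mem_simpl; rewrite ?c0; lia_.
have s1' : mS 1 = m 1 by rewrite sF //; try rewrite /m3; mem_simpl; rewrite ?c1; lia_.
have s3' : mS 3 = m 3 by rewrite sF //; try rewrite /m3; mem_simpl; rewrite ?c3; lia_.
have s4' : mS 4 = m 4 by rewrite sF //; try rewrite /m3; mem_simpl; rewrite ?c4; lia_.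
have s9' : mS 9 = m 9 by rewrite sF //; try rewrite /m3; mem_simpl; rewrite ?c9; lia_.
have s10' : mS 10 = m 10 by rewrite sF //; try rewrite /m3; mem_simpl; rewrite ?c10; lia_.
have s11' : mS 11 = m 11 by rewrite sF //; try rewrite /m3; mem_simpl; rewrite ?c11; lia_.
have sL : Lay n A B C mS by apply: (Lay_frame (m := m)) => //; split.
have q1 k : k < (lo + hi)./2 -> mS (qc + k) = C k.
  move=> hk; rewrite sF; [|apply/eqP; lia_..|lia_].
  rewrite /m3; mem_simpl; try lia_.
  rewrite (_ : qc + k = D - w + k); last lia_.
  rewrite cC //; rewrite /m1; mem_simpl; try lia_.
  by rewrite lC //; lia_.
have q2 k : (lo + hi)./2 <= k <= 2 * n -> mS (qc + k) = Mv.
  move=> hk; rewrite (_ : qc + k = D - w + (lo + hi)./2 + (k - (lo + hi)./2)); last lia_.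
  rewrite sQ; last lia_.
  by rewrite /m3; mem_simpl; rewrite c1 h1.
have lb' : mS bq = n by case: sL.
set res := O n (inst_A mS bq) (inst_B mS bq) (inst_C mS bq).
have [Qt Qf] : (res -> NoViol ((lo + hi)./2)) /\ (res = false -> ViolB ((lo + hi)./2)).
  apply: query_ok => //.
  - by move=> i hi0; rewrite /inst_A; case: sL => _ [sA _]; apply: sA.
  - by move=> i hi0; rewrite /inst_B lb'; case: sL => _ [_ [sB _]]; apply: sB.
  - move=> k hk; rewrite /inst_C lb' (_ : bq + 2 * n + 3 + k = qc + k); last lia_.
    by case: ifP => hk'; [apply: q1 | apply: q2; lia_].
have EO : step prog O T 95 mS = Some (96, upd mS 8 (nat_of_bool res), (T n).+1).
  by rewrite /step /= s4' h4 /inst_n lb'.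
have RO : Run prog O T 95 mS ((T n).+1 + 0) 96 (upd mS 8 (nat_of_bool res)).
  exact: RunS EO (Run0 _ _ _ _ _).
have Rpre := Run_trans R1 (Run_trans RC (Run_trans R3 (Run_trans RS RO))).
case Eres: res Rpre => /= Rpre.
- evar (m5 : memory).
  have R5 : Run prog O T 96 (upd mS 8 1) 5 73 m5.
    rewrite /m5. do 5 st. rewrite ?s3' ?s0' ?h3 ?h0 ?s11' ?h11. exact: Run0.
  exists (7 + ((lo + hi)./2 * 6 + 2 + (1 + ((w - (lo + hi)./2) * 5 + 2 + ((T n).+1 + 0)))) + 5).
  exists m5, ((lo + hi)./2), hi; split; first exact: Run_trans Rpre R5.
  split; first by rewrite /itc; nia.
  split; last lia_.
  split; first by apply: (Lay_frame (m := mS)) => // y hy _; rewrite /m5; mem_simpl.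
  rewrite /m5; mem_simpl.
  rewrite s1' s2 s4' s9' s10' s11' s0'.
  rewrite ?h1 ?h4 ?h9 ?h10 ?h11 ?h0 ?h3 ?addn0.
  do 8 (split; first by []). split; first lia_.
  split; [exact: (Qt Eres) | exact: hVB].
- evar (m5 : memory).
  have R5 : Run prog O T 96 (upd mS 8 0) 5 73 m5.
    rewrite /m5. do 5 st. rewrite ?s3' ?s0' ?h3 ?h0 ?s11' ?h11. exact: Run0.
  exists (7 + ((lo + hi)./2 * 6 + 2 + (1 + ((w - (lo + hi)./2) * 5 + 2 + ((T n).+1 + 0)))) + 5).
  exists m5, lo, ((lo + hi)./2); split; first exact: Run_trans Rpre R5.
  split; first by rewrite /itc; nia.
  split; last lia_.
  split; first by apply: (Lay_frame (m := mS)) => // y hy _; rewrite /m5; mem_simpl.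
  rewrite /m5; mem_simpl.
  rewrite s1' s2 s4' s9' s10' s11' s3'.
  rewrite ?h1 ?h4 ?h9 ?h10 ?h11 ?h0 ?h3 ?addn0.
  do 8 (split; first by []). split; first lia_.
  split; [exact: hNV | move=> _; exact: (Qf Eres)].
Qed.


Lemma bs_exit lo hi m : Inv lo hi m -> hi <= lo.+1 ->
  exists m', Run prog O T 73 m 3 103 m' /\ Inv lo lo.+1 m'.
Proof.
move=> [hL [h1 [h2 [h4 [h9 [h10 [h11 [h3 [h0 [hlh [hNV hVB]]]]]]]]]]] hg.
have Ehi : hi = lo.+1 by lia_.
rewrite Ehi in h0 hlh hVB.
evar (m1 : memory).
have R1 : Run prog O T 73 m 3 103 m1.
  rewrite /m1. do 3 st. exact: Run0.
exists m1; split => //.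
split; first by apply: (Lay_frame (m := m)) => // y hy _; rewrite /m1; mem_simpl.
by rewrite /m1; mem_simpl; do !split => //; lia_.
Qed.

Lemma bs_loop e : forall lo hi m, Inv lo hi m -> hi - lo <= 2 ^ e ->
  exists t m' lo', Run prog O T 73 m t 103 m' /\ t <= e * itc + 3 /\ Inv lo' lo'.+1 m'.
Proof.
elim: e => [|e IH] lo hi m HI hg.
  have [m' [R I]] := bs_exit HI ltac:(move: HI => [_ [_ [_ [_ [_ [_ [_ [_ [_ [? _]]]]]]]]]]; rewrite expn0 in hg; lia_).
  by exists 3, m', lo.
case: (ltnP lo.+1 hi) => hlt; last first.
  have [m' [R I]] := bs_exit HI hlt.
  by exists 3, m', lo; split => //; split => //; lia_.
have [t1 [m1 [lo1 [hi1 [R1 [ht1 [I1 hg1]]]]]]] := iter HI hlt.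
have hg1' : hi1 - lo1 <= 2 ^ e by move: hg; rewrite expnS; lia_.
have [t2 [m2 [lo2 [R2 [ht2 I2]]]]] := IH _ _ _ I1 hg1'.
exists (t1 + t2), m2, lo2; split; first exact: Run_trans R1 R2.
split => //; rewrite mulSn; lia_.
Qed.

End PhD.

Set Implicit Arguments. Unset Strict Implicit.

Section PhE.
Variables (O : oracle) (T : nat -> nat) (n : nat) (A B C : nat -> nat).
Hypothesis Hn : 2 <= n.
Local Notation bq := (Bq n).
Local Notation D := (Dd n).
Local Notation qc := (QC n).
Local Notation w := (W n).

Definition SInv k i (m : memory) := Lay n A B C m /\ m 1 = C k /\ m 2 = 1 /\ m 3 = k /\ m 4 = bq /\
  m 10 = n /\ m 11 = 0 /\ m 5 = i.

Lemma scan_step k i0 j0 i m : witness n A B C i0 j0 -> i0 + j0 = k -> i <= i0 -> SInv k i m ->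
  (exists t mf, Exec prog O T 111 m t mf /\ t <= 15 /\ correct_output n A B C mf) \/
  (i < i0 /\ exists t m', Run prog O T 111 m t 111 m' /\ t <= 14 /\ SInv k i.+1 m').
Proof.
move=> [hi0 hj0 hw] hk hi [hL [h1 [h2 [h3 [h4 [h10 [h11 h5]]]]]]].
have Ebq : bq = 16 * n - 1 by [].
have hL' := hL; move: hL' => [lb [lA [lB lC]]].
case: (ltnP n (k - i)) => hj.
  right; split; first lia_.
  evar (m1 : memory).
  have R1 : Run prog O T 111 m 4 111 m1.
    rewrite /m1. do 4 st. rewrite ?h3 ?h5 ?h2. exact: Run0.
  exists 4, m1; split => //; split => //.
  split; first by apply: (Lay_frame Hn (m := m)) => // y hy _; rewrite /m1; mem_simpl.
  by rewrite /m1; mem_simpl; do !split => //; lia_.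
evar (m1 : memory).
have R1 : Run prog O T 111 m 11 122 m1.
  rewrite /m1. do 11 st. rewrite ?h3 ?h5 ?h2 ?h4 ?h10.
  rewrite lA; last lia_.
  rewrite (_ : bq + n + 1 + 1 + (k - i) = bq + n + 2 + (k - i)); last lia_.
  rewrite lB; last lia_. exact: Run0.
case: (ltnP (C k) (A i + B (k - i))) => hc.
  left.
  evar (m2 : memory).
  have R2 : Run prog O T 122 m1 4 128 m2.
    rewrite /m2 /m1. do 4 st. exact: Run0.
  have E : Exec prog O T 128 m2 0 m2 by apply: ExecHalt.
  exists (11 + 4 + 0), m2; split; first exact: Run_Exec (Run_trans R1 R2) E.
  split => //; left; rewrite /m2 /m1; mem_simpl; rewrite h5 h11 !addn0.
  split => //; split; [lia_|lia_|].
  by rewrite subnKC; last lia_.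
right; split.
  case: (ltngtP i i0) => // hii; try lia_; rewrite hii in hc; move: hc; rewrite (_ : k - i0 = j0); [|lia_]; rewrite -hk; lia_.
evar (m2 : memory).
have R2 : Run prog O T 122 m1 3 111 m2.
  rewrite /m2 /m1. do 3 st. rewrite ?h5 ?h2. exact: Run0.
exists (11 + 3), m2; split; first exact: Run_trans R1 R2.
split => //.
split; first by apply: (Lay_frame Hn (m := m)) => // y hy _; rewrite /m2 /m1; mem_simpl.
by rewrite /m2 /m1; mem_simpl; do !split => //; lia_.
Qed.

Lemma scan k i0 j0 : witness n A B C i0 j0 -> i0 + j0 = k ->
  forall d i m, i0 - i <= d -> i <= i0 -> SInv k i m ->
  exists t mf, Exec prog O T 111 m t mf /\ t <= 14 * d + 15 /\ correct_output n A B C mf.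
Proof.
move=> hw hk; elim=> [|d IH] i m hd hi HS.
  case: (scan_step hw hk hi HS) => [[t [mf [E [ht hc]]]]|[hlt _]]; last lia_.
  by exists t, mf.
case: (scan_step hw hk hi HS) => [[t [mf [E [ht hc]]]]|[hlt [t [m' [R [ht HS']]]]]].
  by exists t, mf; split => //; split => //; lia_.
have [t2 [mf [E [ht2 hc]]]] := IH i.+1 m' ltac:(lia_) hlt HS'.
exists (t + t2), mf; split; first exact: Run_Exec R E.
split => //; lia_.
Qed.

Lemma final lo m : Inv n A B C lo lo.+1 m ->
  exists t mf, Exec prog O T 103 m t mf /\ t <= 14 * n + 40 /\ correct_output n A B C mf.
Proof.
move=> [hL [h1 [h2 [h4 [h9 [h10 [h11 [h3 [h0 [hlh [hNV hVB]]]]]]]]]]].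
have Ebq : bq = 16 * n - 1 by [].
have ED : D = 20 * n + 3 by [].
have Ew : w = 2 * n + 1 by [].
have hL' := hL; move: hL' => [lb [lA [lB lC]]].
case: (ltnP lo w) => hlw; last first.
  evar (m1 : memory).
  have R1 : Run prog O T 103 m 3 106 m1.
    rewrite /m1. do 3 st. exact: Run0.
  have E : Exec prog O T 106 m1 0 m1 by apply: ExecHalt.
  exists (3 + 0), m1; split; first exact: Run_Exec R1 E.
  split; first lia_.
  right; split; first by rewrite /m1; mem_simpl.
  move=> [i [j [hi hj hc]]].
  have := hNV i j hi hj ltac:(lia_); lia_.
have [i0 [j0 [hw hij]]] := hVB hlw.
have hk : i0 + j0 = lo.
  case: hw => hi hj hc.
  case: (ltnP (i0 + j0) lo) => // hlt; last lia_.
  have := hNV i0 j0 hi hj hlt; lia_.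
evar (m1 : memory).
have R1 : Run prog O T 103 m 6 111 m1.
  rewrite /m1. do 6 st. rewrite ?h9 ?h3 ?h4 ?lb. rewrite lC; last lia_. exact: Run0.
have HS : SInv lo 0 m1.
  split; first by apply: (Lay_frame Hn (m := m)) => // y hy _; rewrite /m1; mem_simpl.
  by rewrite /m1; mem_simpl; do !split => //; lia_.
have [t [mf [E [ht hc]]]] := scan hw hk (leqnn _) (leq0n _) HS.
exists (6 + t), mf; split; first exact: Run_Exec R1 E.
split => //.
case: hw => hi _ _; nia.
Qed.

End PhE.

Set Implicit Arguments. Unset Strict Implicit.

Unset Implicit Arguments.
Set Strict Implicit.
Theorem proposition6p1 (T : nat -> nat)
  (HT1 : softO_closed T) (HT2 : superadditive_O T) (HT3 : reads_input T) :
  forall K : nat, exists (K' : nat) (P : seq instr) (c : nat),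
    forall O : oracle, oracle_solves K' O ->
    forall (n : nat) (A B C : nat -> nat), 2 <= n ->
      valid_instance K n A B C ->
      exists (t : nat) (m' : memory),
        Exec P O T 0 (init_mem n A B C) t m' /\
        t <= c * T n * lg n /\
        correct_output n A B C m'.
Proof.
move=> K; have [c0 Hc0] := HT3.
exists (3 * K), prog, (300 * (c0 + 1)).
move=> O HO n A B C Hn Hv.
have [mB [RB [b2 [b3 [b4 [b6 [bb bQ]]]]]]] := phaseAB O T Hn (m0 := init_mem n A B C) erefl.
have [mE [RE [EL [e1 [e2 [e4 [e9 [e10 [e11 [e3 e0]]]]]]]]]] :=
  phaseCE O T Hn b2 b3 b4 b6 bb bQ.
have hlg1 : 1 <= lg n by rewrite /lg trunc_log_gt0.
have hlg2 : n < 2 ^ (lg n).+1 by apply: trunc_log_ltn.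
have HI : Inv n A B C 0 (W n + 1) mE.
  do 9 (split => //); split; first lia_.
  split; first by move=> i j _ _; rewrite ltn0.
  lia_.
have hg : W n + 1 - 0 <= 2 ^ (lg n).+2 by rewrite expnS /W; lia_.
have [tL [mL [lo [RL [htL IL]]]]] := @bs_loop O T n A B C K Hn HO Hv _ _ _ _ HI hg.
have [tF [mf [EF [htF hc]]]] := @final O T n A B C Hn _ _ IL.
exists (40 + ((4 * n - 8) * 6 + 2) + (6 + ((W n * 6 + 2) + 13)) + tL + tF), mf.
split; first exact: Run_Exec (Run_trans (Run_trans RB RE) RL) EF.
split => //.
have hT : n <= c0 * T n by apply: Hc0; lia_.
move: htL; rewrite /itc /W => htL.
have ht1 : 1 <= T n by move: hT; case: (T n) => [|//]; rewrite muln0; lia_.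
have f1 : n * lg n <= c0 * T n * lg n by rewrite leq_mul2r hT orbT.
have f2 : lg n <= T n * lg n by rewrite leq_pmull.
have f3 : T n <= T n * lg n by rewrite leq_pmulr.
have f4 : c0 * T n <= c0 * T n * lg n by rewrite leq_pmulr.
rewrite /W.
nia.
Qed.
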